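(* There is $c_1>0$ (depending on $d,\gamma,\chi$) such that for all $N$ large enough, $$\inf_{x\in\partial B}P_x[H_G<H_\Delta]\ge c_1N^{\gamma-1},$$ where $G=\{x\in B:\mathrm{dist}(x,\partial B)\ge\chi N/2\}$.
   Context: Let $d\ge3$, $\gamma\in(\frac1{d-1},1)$, $\chi\in(0,\frac14)$. Identify $\mathbb T_N^d$ with $\{0,\dots,N-1\}^d$. Let $L=2N^\gamma+\chi N$, $B=\bigcup_{x\in[L,N-L]^d\cap\mathbb Z^d}B(x,\chi N)$ (Euclidean balls), $\Delta=\big(\bigcup_{x\in B}B(x,N^\gamma)\big)^c$, as subsets of $\mathbb T_N^d$. $\partial K=\{x\in K:\exists y\notin K,|x-y|=1\}$; $\mathrm{dist}$ is Euclidean distance. $P_x$ is the law of simple random walk on $\mathbb T_N^d$ started at $x$, $H_K=\inf\{k\ge0:X_k\in K\}$. *)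

(* Defs.v *)
From Stdlib Require Import Reals ZArith Arith Lia Lra.
From Stdlib Require Import Classical ClassicalEpsilon.
Open Scope R_scope.

(* A point of the torus T_N^d = {0,...,N-1}^d is represented by its
   coordinate function; only coordinates i < d are meaningful. *)
Definition pt := nat -> Z.

Definition in_torus (d N : nat) (x : pt) : Prop :=
  forall i, (i < d)%nat -> (0 <= x i < Z.of_nat N)%Z.

Fixpoint sumR (n : nat) (f : nat -> R) : R :=
  match n with
  | O => 0
  | S m => sumR m f + f m
  end.

Definition tdist (d N : nat) (x y : pt) : R :=
  sqrt (sumR d (fun i =>
    let a := Rabs (IZR (x i - y i)) in (Rmin a (INR N - a)) ^ 2)).

Definition Lrad (N : nat) (gamma chi : R) : R :=
  2 * Rpower (INR N) gamma + chi * INR N.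

Definition Bset (d N : nat) (gamma chi : R) (y : pt) : Prop :=
  in_torus d N y /\
  exists c : pt, in_torus d N c /\
    (forall i, (i < d)%nat ->
       Lrad N gamma chi <= IZR (c i) <= INR N - Lrad N gamma chi) /\
    tdist d N c y <= chi * INR N.

Definition DeltaSet (d N : nat) (gamma chi : R) (y : pt) : Prop :=
  in_torus d N y /\
  ~ (exists z, Bset d N gamma chi z /\ tdist d N z y <= Rpower (INR N) gamma).

Definition bdry (d N : nat) (K : pt -> Prop) (x : pt) : Prop :=
  K x /\ exists y, in_torus d N y /\ ~ K y /\ tdist d N x y = 1.

Definition Gset (d N : nat) (gamma chi : R) (x : pt) : Prop :=
  Bset d N gamma chi x /\
  forall z, bdry d N (Bset d N gamma chi) z -> chi * INR N / 2 <= tdist d N x z.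

Definition srw_step (d N : nat) (k : nat) (x : pt) : pt :=
  fun i => if Nat.eqb i (k / 2)
           then (if Nat.even k then ((x i + 1) mod Z.of_nat N)%Z
                 else ((x i - 1) mod Z.of_nat N)%Z)
           else x i.

Definition decP (P : Prop) : {P} + {~ P} := excluded_middle_informative P.

(* srw_hit d N A D n x = P_x[H_A < H_D, H_A <= n] for SRW on T_N^d
   (each of the 2d directions with probability 1/(2d)). *)
Fixpoint srw_hit (d N : nat) (A D : pt -> Prop) (n : nat) (x : pt) : R :=
  if decP (D x) then 0 else if decP (A x) then 1 else
  match n with
  | O => 0
  | S m => / INR (2 * d) * sumR (2 * d) (fun k => srw_hit d N A D m (srw_step d N k x))
  end.

(* P_x[H_A < H_D] is the (monotone) limit of srw_hit ... n x as n -> oo. *)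

(* Main.v *)
Require Import Defs.
From Stdlib Require Import Reals ZArith Arith Lia Lra Psatz.
From Stdlib Require Import Classical.
Open Scope R_scope.

Lemma sumR_ext n f g : (forall i, (i < n)%nat -> f i = g i) -> sumR n f = sumR n g.
Proof. induction n; simpl; intros H; auto. rewrite IHn by (intros; apply H; lia). rewrite H by lia. auto. Qed.

Lemma sumR_le n f g : (forall i, (i < n)%nat -> f i <= g i) -> sumR n f <= sumR n g.
Proof. induction n; simpl; intros H; [lra|]. assert (f n <= g n) by (apply H; lia).
 assert (sumR n f <= sumR n g) by (apply IHn; intros; apply H; lia). lra. Qed.

Lemma sumR_nonneg n f : (forall i, (i < n)%nat -> 0 <= f i) -> 0 <= sumR n f.
Proof. intros H. replace 0 with (sumR n (fun _ => 0)).
 apply sumR_le; auto. induction n; simpl; auto. rewrite IHn; [lra|]. intros; apply H; lia. Qed.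

Lemma sumR_plus n f g : sumR n (fun i => f i + g i) = sumR n f + sumR n g.
Proof. induction n; simpl; [lra|]. rewrite IHn; lra. Qed.

Lemma sumR_scal n c f : sumR n (fun i => c * f i) = c * sumR n f.
Proof. induction n; simpl; [lra|]. rewrite IHn; lra. Qed.

Lemma sumR_const n c : sumR n (fun _ => c) = INR n * c.
Proof. induction n; simpl sumR; [simpl; lra|]. rewrite IHn, S_INR; lra. Qed.

Lemma sumR_term_le n f i : (forall j, (j < n)%nat -> 0 <= f j) -> (i < n)%nat -> f i <= sumR n f.
Proof. induction n; intros H Hi; [lia|]. simpl.
 assert (0 <= sumR n f) by (apply sumR_nonneg; intros; apply H; lia).
 destruct (Nat.eq_dec i n) as [->|]. lra.
 assert (f i <= sumR n f) by (apply IHn; [intros; apply H|]; lia).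
 assert (0 <= f n) by (apply H; lia). lra. Qed.

Lemma sumR_update n F G i : (i < n)%nat -> (forall j, j <> i -> F j = G j) ->
  sumR n F = sumR n G - G i + F i.
Proof. induction n; intros Hi H; [lia|]. simpl.
 destruct (Nat.eq_dec i n) as [->|].
 - rewrite (sumR_ext n F G); [lra|]. intros j Hj; apply H; lia.
 - rewrite IHn by (auto; lia). rewrite (H n) by lia. lra. Qed.

Lemma sumR_pairs n g : sumR (2 * n) g = sumR n (fun i => g (2 * i)%nat + g (2 * i + 1)%nat).
Proof. induction n; [simpl; auto|].
 replace (2 * S n)%nat with (S (S (2 * n))) by lia.
 change (sumR (S (S (2 * n))) g) with (sumR (2 * n) g + g (2 * n)%nat + g (S (2 * n))).
 rewrite IHn. change (sumR (S n) (fun i => g (2 * i)%nat + g (2 * i + 1)%nat)) with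
   (sumR n (fun i => g (2 * i)%nat + g (2 * i + 1)%nat) + (g (2 * n)%nat + g (2 * n + 1)%nat)).
 replace (S (2 * n)) with (2 * n + 1)%nat by lia. lra. Qed.

Lemma avg_bounds d (g : nat -> R) lo hi : (0 < d)%nat ->
  (forall k, (k < 2 * d)%nat -> lo <= g k <= hi) ->
  lo <= / INR (2 * d) * sumR (2 * d) g <= hi.
Proof. intros Hd H.
 assert (Hp : 0 < INR (2 * d)) by (apply lt_0_INR; lia).
 assert (sumR (2*d) (fun _ => lo) <= sumR (2*d) g) by (apply sumR_le; intros; apply H; auto).
 assert (sumR (2*d) g <= sumR (2*d) (fun _ => hi)) by (apply sumR_le; intros; apply H; auto).
 rewrite !sumR_const in *. split.
 - apply (Rmult_le_reg_l (INR (2*d))); auto. rewrite <- Rmult_assoc, Rinv_r by lra. lra.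
 - apply (Rmult_le_reg_l (INR (2*d))); auto. rewrite <- Rmult_assoc, Rinv_r by lra. lra. Qed.

Lemma CS n a b : (sumR n (fun i => a i * b i))^2 <= sumR n (fun i => a i ^ 2) * sumR n (fun i => b i ^ 2).
Proof. induction n; cbn [sumR]; [lra|].
 set (P := sumR n (fun i => a i * b i)) in *.
 set (S := sumR n (fun i => a i ^ 2)) in *.
 set (T := sumR n (fun i => b i ^ 2)) in *.
 assert (HS : 0 <= S) by (apply sumR_nonneg; intros; apply pow2_ge_0).
 assert (HT : 0 <= T) by (apply sumR_nonneg; intros; apply pow2_ge_0).
 assert (HP : Rabs P <= sqrt S * sqrt T).
 { rewrite <- sqrt_mult by auto. rewrite <- (sqrt_pow2 (Rabs P)) by apply Rabs_pos.
   apply sqrt_le_1_alt. rewrite pow2_abs. lra. }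
 assert (H2 : 2 * P * (a n * b n) <= S * b n ^ 2 + a n ^ 2 * T).
 { assert (HsS := sqrt_sqrt S HS). assert (HsT := sqrt_sqrt T HT).
   assert (0 <= sqrt S) by apply sqrt_pos. assert (0 <= sqrt T) by apply sqrt_pos.
   assert (P * (a n * b n) <= Rabs P * Rabs (a n * b n)) by (rewrite <- Rabs_mult; apply RRle_abs).
   assert (0 <= (sqrt S * Rabs (b n) - sqrt T * Rabs (a n))^2) by apply pow2_ge_0.
   rewrite Rabs_mult in *.
   assert (Rabs (b n) ^2 = b n ^ 2) by apply pow2_abs.
   assert (Rabs (a n) ^2 = a n ^ 2) by apply pow2_abs.
   assert (0 <= Rabs (a n)) by apply Rabs_pos. assert (0 <= Rabs (b n)) by apply Rabs_pos.
   assert (Rabs P * (Rabs (a n) * Rabs (b n)) <= sqrt S * sqrt T * (Rabs (a n) * Rabs (b n))) by (apply Rmult_le_compat_r; nra).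
   nra. }
 replace ((P + a n * b n) ^ 2) with (P^2 + 2 * P * (a n * b n) + (a n * b n)^2) by ring.
 replace ((S + a n ^ 2) * (T + b n ^ 2)) with (S * T + (S * b n ^ 2 + a n ^ 2 * T) + (a n * b n)^2) by ring.
 lra. Qed.

Lemma sqrt_sum_sq_ge n a : 0 <= sqrt (sumR n (fun i => a i ^ 2)).
Proof. apply sqrt_pos. Qed.

Lemma Minkowski n a b :
  sqrt (sumR n (fun i => (a i + b i) ^ 2)) <=
  sqrt (sumR n (fun i => a i ^ 2)) + sqrt (sumR n (fun i => b i ^ 2)).
Proof.
 set (S := sumR n (fun i => a i ^ 2)). set (T := sumR n (fun i => b i ^ 2)).
 assert (HS : 0 <= S) by (apply sumR_nonneg; intros; apply pow2_ge_0).
 assert (HT : 0 <= T) by (apply sumR_nonneg; intros; apply pow2_ge_0).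
 assert (E : sumR n (fun i => (a i + b i) ^ 2) = S + 2 * sumR n (fun i => a i * b i) + T).
 { unfold S, T. rewrite <- sumR_scal, <- !sumR_plus. apply sumR_ext; intros; ring. }
 assert (HC := CS n a b). fold S T in HC.
 assert (HP : sumR n (fun i => a i * b i) <= sqrt S * sqrt T).
 { rewrite <- sqrt_mult by auto. set (P := sumR n (fun i => a i * b i)) in *.
   destruct (Rle_dec P 0). { assert (0 <= sqrt (S*T)) by apply sqrt_pos. lra. }
   rewrite <- (sqrt_pow2 P) by lra. apply sqrt_le_1_alt. lra. }
 assert (0 <= sqrt S) by apply sqrt_pos. assert (0 <= sqrt T) by apply sqrt_pos.
 rewrite E. rewrite <- (sqrt_pow2 (sqrt S + sqrt T)) by lra. apply sqrt_le_1_alt.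
 assert (HsS := sqrt_sqrt S HS). assert (HsT := sqrt_sqrt T HT). nra. Qed.

Lemma term_le_sqrt n f i : (forall j, (j < n)%nat -> 0 <= f j) -> (i < n)%nat ->
  f i <= sqrt (sumR n (fun j => f j ^ 2)).
Proof. intros H Hi. rewrite <- (sqrt_pow2 (f i)) by (apply H; auto). apply sqrt_le_1_alt.
 apply (sumR_term_le n (fun j => f j ^ 2)); auto. intros; apply pow2_ge_0. Qed.

Lemma sum_le_n_sqrt n f : (forall j, (j < n)%nat -> 0 <= f j) ->
  sumR n f <= INR n * sqrt (sumR n (fun j => f j ^ 2)).
Proof. intros H. rewrite <- sumR_const. apply sumR_le. intros; apply term_le_sqrt; auto. Qed.

Lemma sqrt_sumR_mono n f g : (forall j, (j < n)%nat -> 0 <= f j <= g j) ->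
  sqrt (sumR n (fun j => f j ^ 2)) <= sqrt (sumR n (fun j => g j ^ 2)).
Proof. intros H. apply sqrt_le_1_alt. apply sumR_le. intros j Hj. destruct (H j Hj). apply pow_incr; auto. Qed.

Lemma sqrt_sum_ones n : sqrt (sumR n (fun _ => 1 ^ 2)) <= INR n.
Proof. rewrite sumR_const. destruct n. simpl. rewrite Rmult_0_l, sqrt_0. lra.
 assert (1 <= INR (S n)) by (apply (le_INR 1); lia).
 rewrite pow1, Rmult_1_r. apply Rle_trans with (sqrt (INR (S n) ^ 2)).
 apply sqrt_le_1_alt. nra. rewrite sqrt_pow2; lra. Qed.

Lemma exp_quad z : Rabs z <= 1/2 -> 1 - z + z^2/3 <= exp (- z).
Proof. intros Hz. assert (Hz2 : -(1/2) <= z <= 1/2) by (unfold Rabs in Hz; destruct Rcase_abs in Hz; lra). clear Hz.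
 assert (E : exp (-z) = (exp (- z / 4)) ^ 4).
 { simpl. rewrite Rmult_1_r, <- !exp_plus. f_equal. lra. }
 rewrite E. assert (H1 := exp_ineq1_le (- z / 4)).
 assert (H2 : (1 + - z / 4) ^ 4 <= exp (- z / 4) ^ 4) by (apply pow_incr; lra).
 assert (1 - z + z ^ 2 / 3 <= (1 + - z/4)^4).
 { assert (0 <= z^2 * (1/24 - z/16 + z^2/256)). { apply Rmult_le_pos. apply pow2_ge_0. nra. }
   nra. }
 lra. Qed.


Definition Dd (Lr Rr t : R) := Rmax 0 (Rmax (Lr - t) (t - Rr)).

Lemma Dd_spec Lr Rr t : Lr <= Rr ->
  Dd Lr Rr t = if Rle_dec t Lr then Lr - t else if Rle_dec t Rr then 0 else t - Rr.
Proof. intros H. unfold Dd, Rmax.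
 repeat (destruct Rle_dec); lra. Qed.

Lemma Dd_nonneg Lr Rr t : 0 <= Dd Lr Rr t.
Proof. unfold Dd. apply Rmax_l. Qed.

Ltac dd_cases H := repeat rewrite (Dd_spec _ _ _ H); repeat destruct Rle_dec.

Lemma Dd_second Lr Rr t : Lr + 2 <= Rr ->
  (Dd Lr Rr (t+1))^2 - (Dd Lr Rr t)^2 + ((Dd Lr Rr (t-1))^2 - (Dd Lr Rr t)^2) <= 2.
Proof. intros H. assert (H' : Lr <= Rr) by lra. dd_cases H'; nra. Qed.

Lemma Dd_diff Lr Rr t : Lr + 2 <= Rr ->
  16 * (Dd Lr Rr t)^2 - 32 * Dd Lr Rr t <=
  ((Dd Lr Rr (t+1))^2 - (Dd Lr Rr t)^2 - ((Dd Lr Rr (t-1))^2 - (Dd Lr Rr t)^2))^2.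
Proof. intros H. assert (H' : Lr <= Rr) by lra. dd_cases H'; try nra; (apply Rle_trans with 0; [nra | apply pow2_ge_0]). Qed.

Lemma Dd_abs1 Lr Rr t s : Lr <= Rr -> (s = 1 \/ s = -1) ->
  Rabs ((Dd Lr Rr (t+s))^2 - (Dd Lr Rr t)^2) <= 2 * Dd Lr Rr t + 1.
Proof. intros H Hs. apply Rabs_le. destruct Hs; subst; dd_cases H; split; nra. Qed.

Lemma Dd_lip Lr Rr a b : Lr <= Rr -> Dd Lr Rr b <= Dd Lr Rr a + Rabs (a - b).
Proof. intros H. unfold Rabs. destruct Rcase_abs; dd_cases H; lra. Qed.

Lemma Dd_lip_torus Lr n a b : 0 <= Lr -> Lr <= n - Lr -> 0 <= a < n -> 0 <= b < n ->
  Dd Lr (n - Lr) b <= Dd Lr (n - Lr) a + Rmin (Rabs (a - b)) (n - Rabs (a - b)).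
Proof. intros H0 H Ha Hb. unfold Rmin, Rabs. repeat destruct Rcase_abs; repeat destruct Rle_dec;
 dd_cases H; lra. Qed.


Lemma torus_R d N y i : in_torus d N y -> (i < d)%nat -> 0 <= IZR (y i) < INR N.
Proof. intros H Hi. destruct (H i Hi). rewrite INR_IZR_INZ. split; [apply IZR_le|apply IZR_lt]; lia. Qed.

Lemma R_torus (N : nat) (v : Z) : 0 <= IZR v < INR N -> (0 <= v < Z.of_nat N)%Z.
Proof. rewrite INR_IZR_INZ. intros [H1 H2]. split; [apply le_IZR|apply lt_IZR]; auto. Qed.

Definition tm N (a b : Z) := Rmin (Rabs (IZR (a - b))) (INR N - Rabs (IZR (a - b))).

Lemma tdist_eq d N x y : tdist d N x y = sqrt (sumR d (fun i => tm N (x i) (y i) ^ 2)).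
Proof. reflexivity. Qed.

Lemma tm_bounds d N x y i : in_torus d N x -> in_torus d N y -> (i < d)%nat ->
  0 <= tm N (x i) (y i) <= Rabs (IZR (x i - y i)).
Proof. intros Hx Hy Hi. apply (torus_R _ _ _ i) in Hx; auto. apply (torus_R _ _ _ i) in Hy; auto.
 unfold tm. rewrite minus_IZR. unfold Rmin, Rabs. repeat destruct Rle_dec; repeat destruct Rcase_abs; lra. Qed.

Lemma tdist_le d N x y b : in_torus d N x -> in_torus d N y ->
  (forall i, (i < d)%nat -> Rabs (IZR (x i - y i)) <= b i) ->
  tdist d N x y <= sqrt (sumR d (fun i => b i ^ 2)).
Proof. intros Hx Hy H. rewrite tdist_eq. apply sqrt_sumR_mono. intros j Hj.
 destruct (tm_bounds d N x y j Hx Hy Hj). split; auto. eapply Rle_trans; eauto. Qed.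

Lemma tdist_nonneg d N x y : 0 <= tdist d N x y.
Proof. apply sqrt_pos. Qed.

Definition DD N gamma chi t := Dd (Lrad N gamma chi) (INR N - Lrad N gamma chi) t.
Definition ss d N gamma chi (y : pt) := sumR d (fun i => DD N gamma chi (IZR (y i)) ^ 2).
Definition rho d N gamma chi y := sqrt (ss d N gamma chi y).

Lemma ss_nonneg d N gamma chi y : 0 <= ss d N gamma chi y.
Proof. apply sumR_nonneg. intros; apply pow2_ge_0. Qed.

Lemma rho_sq d N gamma chi y : rho d N gamma chi y ^ 2 = ss d N gamma chi y.
Proof. unfold rho. rewrite <- Rsqr_pow2. apply Rsqr_sqrt, ss_nonneg. Qed.

Lemma DD_le_rho d N gamma chi y i : (i < d)%nat -> DD N gamma chi (IZR (y i)) <= rho d N gamma chi y.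
Proof. intros Hi. unfold rho, ss. apply (term_le_sqrt d (fun i => DD N gamma chi (IZR (y i)))); auto.
 intros; apply Dd_nonneg. Qed.

Lemma rho_lip d N gamma chi y z : 0 <= Lrad N gamma chi <= INR N - Lrad N gamma chi ->
  in_torus d N y -> in_torus d N z ->
  rho d N gamma chi z <= rho d N gamma chi y + tdist d N y z.
Proof. intros [H0 H1] Hy Hz. unfold rho, ss. rewrite tdist_eq.
 eapply Rle_trans; [|apply Minkowski].
 apply sqrt_sumR_mono. intros j Hj. split. apply Dd_nonneg.
 destruct (tm_bounds d N y z j Hy Hz Hj).
 apply (torus_R _ _ _ j) in Hy; auto. apply (torus_R _ _ _ j) in Hz; auto.
 unfold DD, tm. rewrite minus_IZR. apply Dd_lip_torus; auto. Qed.


Definition geo N gamma chi := 0 < Lrad N gamma chi /\ Lrad N gamma chi + 2 <= INR N - Lrad N gamma chi.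

Lemma geo_w N gamma chi : geo N gamma chi -> 0 <= Lrad N gamma chi <= INR N - Lrad N gamma chi.
Proof. unfold geo; lra. Qed.

Lemma rho_center d N gamma chi c : geo N gamma chi ->
  (forall i, (i < d)%nat -> Lrad N gamma chi <= IZR (c i) <= INR N - Lrad N gamma chi) ->
  rho d N gamma chi c = 0.
Proof. intros G H. unfold rho, ss. rewrite (sumR_ext d _ (fun _ => 0)). rewrite sumR_const, Rmult_0_r, sqrt_0; auto.
 intros i Hi. destruct (H i Hi). assert (E : DD N gamma chi (IZR (c i)) = 0).
 { unfold DD. rewrite Dd_spec by (unfold geo in G; lra). repeat destruct Rle_dec; lra. }
 rewrite E; ring. Qed.

Lemma B_rho d N gamma chi z : geo N gamma chi -> Bset d N gamma chi z ->
  rho d N gamma chi z <= chi * INR N.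
Proof. intros G [Hz [c [Hc [Hci Hd]]]].
 pose proof (rho_lip d N gamma chi c z (geo_w _ _ _ G) Hc Hz).
 rewrite (rho_center d N gamma chi c G Hci) in H. lra. Qed.

Lemma notDelta_rho d N gamma chi y : geo N gamma chi -> in_torus d N y -> ~ DeltaSet d N gamma chi y ->
  rho d N gamma chi y <= chi * INR N + Rpower (INR N) gamma.
Proof. intros G Hy HD. unfold DeltaSet in HD.
 assert (exists z, Bset d N gamma chi z /\ tdist d N z y <= Rpower (INR N) gamma) as [z [Hz Hzy]].
 { apply NNPP. intro C. apply HD. split; auto. }
 pose proof (B_rho d N gamma chi z G Hz).
 pose proof (rho_lip d N gamma chi z y (geo_w _ _ _ G) (proj1 Hz) Hy). lra. Qed.

Definition cl N gamma chi := up (Lrad N gamma chi).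
Definition cr N gamma chi := (up (INR N - Lrad N gamma chi) - 1)%Z.
Definition clamp N gamma chi (v : Z) := Z.max (cl N gamma chi) (Z.min (cr N gamma chi) v).

Lemma cl_cr N gamma chi : geo N gamma chi ->
  Lrad N gamma chi < IZR (cl N gamma chi) <= Lrad N gamma chi + 1 /\
  INR N - Lrad N gamma chi - 1 < IZR (cr N gamma chi) <= INR N - Lrad N gamma chi /\
  (cl N gamma chi <= cr N gamma chi)%Z.
Proof. intros G. unfold cl, cr. destruct (archimed (Lrad N gamma chi)).
 destruct (archimed (INR N - Lrad N gamma chi)). rewrite minus_IZR. unfold geo in G.
 split; [lra|]. split; [lra|]. apply le_IZR. rewrite minus_IZR. lra. Qed.

Lemma clamp_prop N gamma chi v : geo N gamma chi ->
  Lrad N gamma chi <= IZR (clamp N gamma chi v) <= INR N - Lrad N gamma chi /\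
  Rabs (IZR (clamp N gamma chi v - v)) <= DD N gamma chi (IZR v) + 1.
Proof. intros G. destruct (cl_cr N gamma chi G) as [[H1 H2] [[H3 H4] H5]].
 pose proof (geo_w _ _ _ G). unfold clamp, DD.
 set (a := cl N gamma chi) in *. set (b := cr N gamma chi) in *.
 rewrite (Dd_spec) by lra. assert (IZR a <= IZR b) by (apply IZR_le; lia).
 destruct (Z.le_gt_cases v a).
 - rewrite Z.min_r by lia. rewrite Z.max_l by lia. assert (IZR v <= IZR a) by (apply IZR_le; lia).
   rewrite minus_IZR. unfold Rabs. repeat destruct Rle_dec; destruct Rcase_abs; split; lra.
 - destruct (Z.le_gt_cases v b).
   + rewrite Z.min_r by lia. rewrite Z.max_r by lia. replace (v - v)%Z with 0%Z by lia.
     assert (IZR a < IZR v) by (apply IZR_lt; lia). assert (IZR v <= IZR b) by (apply IZR_le; lia).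
     rewrite Rabs_R0. split; [lra|]. repeat destruct Rle_dec; lra.
   + rewrite Z.min_l by lia. rewrite Z.max_r by lia. assert (IZR b < IZR v) by (apply IZR_lt; lia).
     assert (IZR b + 1 <= IZR v) by (rewrite <- plus_IZR; apply IZR_le; lia).
     rewrite minus_IZR. unfold Rabs. repeat destruct Rle_dec; destruct Rcase_abs; split; lra. Qed.

Lemma sqrt_DD1 d N gamma chi y :
  sqrt (sumR d (fun i => (DD N gamma chi (IZR (y i)) + 1) ^ 2)) <= rho d N gamma chi y + INR d.
Proof. eapply Rle_trans. apply (Minkowski d (fun i => DD N gamma chi (IZR (y i))) (fun _ => 1)).
 pose proof (sqrt_sum_ones d). unfold rho, ss. lra. Qed.

Lemma inB d N gamma chi y : geo N gamma chi -> in_torus d N y ->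
  rho d N gamma chi y + INR d <= chi * INR N -> Bset d N gamma chi y.
Proof. intros G Hy H. split; auto. exists (fun i => clamp N gamma chi (y i)).
 assert (Hc : in_torus d N (fun i => clamp N gamma chi (y i))).
 { intros i Hi. apply R_torus. destruct (clamp_prop N gamma chi (y i) G) as [[? ?] _]. unfold geo in G. lra. }
 split; auto. split.
 - intros i Hi. apply clamp_prop; auto.
 - eapply Rle_trans. apply (tdist_le d N _ _ (fun i => DD N gamma chi (IZR (y i)) + 1)); auto.
   intros i Hi. apply clamp_prop; auto.
   pose proof (sqrt_DD1 d N gamma chi y). lra. Qed.

Lemma inG d N gamma chi y : geo N gamma chi -> in_torus d N y ->
  rho d N gamma chi y <= chi * INR N / 2 - INR d - 1 -> Gset d N gamma chi y.
Proof. intros G Hy H. split.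
 - apply inB; auto. assert (0 <= rho d N gamma chi y) by apply sqrt_pos.
   pose proof (pos_INR d). lra.
 - intros z [Hz [w [Hw [HnB Hzw]]]].
   assert (Hzt : in_torus d N z) by apply Hz.
   assert (rho d N gamma chi w + INR d > chi * INR N).
   { apply Rnot_le_gt. intro C. apply HnB. apply inB; auto. }
   pose proof (rho_lip d N gamma chi z w (geo_w _ _ _ G) Hzt Hw).
   pose proof (rho_lip d N gamma chi y z (geo_w _ _ _ G) Hy Hzt). lra. Qed.


Definition truncZ (r : R) : Z := if Rle_dec 0 r then Int_part r else (- Int_part (- r))%Z.

Lemma Int_part_nonneg r : 0 <= r -> 0 <= IZR (Int_part r) <= r /\ r - 1 < IZR (Int_part r).
Proof. intros H. destruct (base_Int_part r). split; [|lra]. split; auto.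
 assert (-1 < Int_part r)%Z by (apply lt_IZR; lra). apply IZR_le. lia. Qed.

Lemma trunc_prop r : (0 <= r -> 0 <= IZR (truncZ r) <= r) /\ (r < 0 -> r <= IZR (truncZ r) <= 0)
  /\ Rabs (r - IZR (truncZ r)) < 1.
Proof. unfold truncZ. destruct Rle_dec.
 - destruct (Int_part_nonneg r r0). split; [lra|]. split; [lra|]. unfold Rabs; destruct Rcase_abs; lra.
 - destruct (Int_part_nonneg (-r)) as [? ?]; [lra|]. rewrite opp_IZR.
   split; [lra|]. split; [lra|]. unfold Rabs; destruct Rcase_abs; lra. Qed.

Lemma sqrt_scal_sq n t b : 0 <= t -> sqrt (sumR n (fun i => (t * b i) ^ 2)) = t * sqrt (sumR n (fun i => b i ^ 2)).
Proof. intros Ht. rewrite (sumR_ext n _ (fun i => t ^ 2 * b i ^ 2)) by (intros; ring).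
 rewrite sumR_scal, sqrt_mult_alt by apply pow2_ge_0. rewrite sqrt_pow2 by auto. auto. Qed.

Lemma notDelta d N gamma chi y : geo N gamma chi -> in_torus d N y ->
  INR d < chi * INR N -> 6 * INR d <= Rpower (INR N) gamma ->
  rho d N gamma chi y < chi * INR N + Rpower (INR N) gamma / 2 -> ~ DeltaSet d N gamma chi y.
Proof. intros G Hy Hd Hg Hr [_ HD]. apply HD. pose proof (pos_INR d) as Hd0.
 set (c := fun i => clamp N gamma chi (y i)).
 assert (Hc : in_torus d N c).
 { intros i Hi. apply R_torus. destruct (clamp_prop N gamma chi (y i) G) as [[? ?] _]. unfold geo in G. unfold c. lra. }
 assert (Hci : forall i, (i < d)%nat -> Lrad N gamma chi <= IZR (c i) <= INR N - Lrad N gamma chi).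
 { intros i Hi. apply clamp_prop; auto. }
 set (k := fun i => IZR (y i - c i)).
 set (A := sqrt (sumR d (fun i => Rabs (k i) ^ 2))).
 assert (HA : A <= rho d N gamma chi y + INR d).
 { eapply Rle_trans; [|apply sqrt_DD1]. apply sqrt_sumR_mono. intros j Hj. split. apply Rabs_pos.
   unfold k. rewrite <- Rabs_Ropp, <- opp_IZR. replace (- (y j - c j))%Z with (c j - y j)%Z by lia.
   apply clamp_prop; auto. }
 assert (HA0 : 0 <= A) by apply sqrt_pos.
 assert (Hrho0 : 0 <= rho d N gamma chi y) by apply sqrt_pos.
 assert (Hkc : forall i, IZR (c i - y i) = - k i) by (intros; unfold k; rewrite <- opp_IZR; f_equal; lia).
 destruct (Rle_dec A (chi * INR N)).
 - exists y. split.
   + split; auto. exists c. split; auto. split; auto.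
     eapply Rle_trans. apply (tdist_le d N c y (fun i => Rabs (k i))); auto.
     intros i Hi. rewrite Hkc, Rabs_Ropp. lra. fold A. lra.
   + eapply Rle_trans. apply (tdist_le d N y y (fun i => 0)); auto.
     intros i Hi. replace (y i - y i)%Z with 0%Z by lia. rewrite Rabs_R0. lra.
     rewrite sumR_const. replace (INR d * 0 ^ 2) with 0 by ring. rewrite sqrt_0. pose proof (pos_INR d). lra.
 - set (t := (chi * INR N - INR d) / A).
   assert (HApos : 0 < A) by lra.
   assert (Ht : 0 < t < 1).
   { unfold t. split. apply Rdiv_lt_0_compat; lra.
     apply (Rmult_lt_reg_r A); auto. unfold Rdiv. rewrite Rmult_assoc, Rinv_l by lra. lra. }
   assert (HtA : t * A = chi * INR N - INR d) by (unfold t; field; lra).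
   set (z := fun i => (c i + truncZ (t * k i))%Z).
   assert (Hzi : forall i, IZR (z i) = IZR (c i) + IZR (truncZ (t * k i))) by (intros; unfold z; apply plus_IZR).
   assert (Htau : forall i, Rabs (IZR (truncZ (t * k i))) <= t * Rabs (k i) /\
                   Rabs (k i - IZR (truncZ (t * k i))) <= (1 - t) * Rabs (k i) + 1 /\
                   ((0 <= k i -> 0 <= IZR (truncZ (t * k i)) <= k i) /\ (k i < 0 -> k i <= IZR (truncZ (t * k i)) <= 0))).
   { intros i. destruct (trunc_prop (t * k i)) as [P1 [P2 P3]].
     destruct (Rle_dec 0 (k i)).
     - assert (0 <= t * k i) by nra. specialize (P1 H). rewrite (Rabs_pos_eq (k i)) by auto.
       rewrite Rabs_pos_eq by lra. split; [lra|]. split.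
       + destruct (Rabs_def2 _ _ P3). apply Rabs_le. split; nra.
       + split; [nra|]. intros; lra.
     - assert (t * k i < 0) by nra. specialize (P2 H). rewrite (Rabs_left (k i)) by lra.
       rewrite (Rabs_left1 (IZR (truncZ (t * k i)))) by lra. split; [nra|]. split.
       + destruct (Rabs_def2 _ _ P3). apply Rabs_le. split; nra.
       + split; [intros; lra|]. intros; nra. }
   assert (Hz : in_torus d N z).
   { intros i Hi. apply R_torus. rewrite Hzi. destruct (Htau i) as [_ [_ [T1 T2]]].
     pose proof (torus_R d N c i Hc Hi). pose proof (torus_R d N y i Hy Hi).
     assert (Ek : IZR (y i) = IZR (c i) + k i) by (unfold k; rewrite minus_IZR; ring).
     destruct (Rle_dec 0 (k i)) as [Hk|Hk]. specialize (T1 Hk). lra. assert (Hk2 : k i < 0) by lra. specialize (T2 Hk2). lra. }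
   exists z. split.
   + split; auto. exists c. split; auto. split; auto.
     eapply Rle_trans. apply (tdist_le d N c z (fun i => t * Rabs (k i))); auto.
     intros i Hi. rewrite minus_IZR, Hzi. replace (IZR (c i) - (IZR (c i) + IZR (truncZ (t * k i)))) with (- IZR (truncZ (t * k i))) by ring.
     rewrite Rabs_Ropp. apply Htau.
     rewrite sqrt_scal_sq by lra. fold A. pose proof (pos_INR d). lra.
   + eapply Rle_trans. apply (tdist_le d N z y (fun i => (1 - t) * Rabs (k i) + 1)); auto.
     intros i Hi. rewrite minus_IZR, Hzi.
     replace (IZR (c i) + IZR (truncZ (t * k i)) - IZR (y i)) with (- (k i - IZR (truncZ (t * k i)))) by (unfold k; rewrite minus_IZR; ring).
     rewrite Rabs_Ropp. apply Htau.
     eapply Rle_trans. apply (Minkowski d (fun i => (1 - t) * Rabs (k i)) (fun _ => 1)).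
     rewrite sqrt_scal_sq by lra. fold A. pose proof (sqrt_sum_ones d).
     assert ((1 - t) * A = A - (chi * INR N - INR d)) by lra. lra. Qed.


Lemma div2_even i : ((2 * i) / 2 = i)%nat.
Proof. rewrite Nat.mul_comm. apply Nat.div_mul. lia. Qed.
Lemma div2_odd i : ((2 * i + 1) / 2 = i)%nat.
Proof. symmetry. apply (Nat.div_unique _ 2 i 1); lia. Qed.

Lemma step_even d N i y j : srw_step d N (2 * i) y j = if Nat.eqb j i then ((y j + 1) mod Z.of_nat N)%Z else y j.
Proof. unfold srw_step. rewrite div2_even, Nat.even_even. auto. Qed.
Lemma step_odd d N i y j : srw_step d N (2 * i + 1) y j = if Nat.eqb j i then ((y j - 1) mod Z.of_nat N)%Z else y j.
Proof. unfold srw_step. rewrite div2_odd, Nat.even_odd. auto. Qed.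

Lemma step_torus d N k y : (0 < N)%nat -> in_torus d N y -> in_torus d N (srw_step d N k y).
Proof. intros HN Hy i Hi. unfold srw_step. destruct (Nat.eqb i (k/2)); [destruct (Nat.even k)|]; auto;
 apply Z.mod_pos_bound; lia. Qed.

Definition psi d N gamma chi lam y := exp (- lam * ss d N gamma chi y).

Lemma coord_inner d N gamma chi y i : geo N gamma chi -> in_torus d N y -> (i < d)%nat ->
  rho d N gamma chi y < Lrad N gamma chi - 1 ->
  (0 <= y i - 1)%Z /\ (y i + 1 < Z.of_nat N)%Z.
Proof. intros G Hy Hi Hr. pose proof (DD_le_rho d N gamma chi y i Hi).
 pose proof (torus_R d N y i Hy Hi). unfold DD in H. rewrite Dd_spec in H by (unfold geo in G; lra).
 assert (1 < IZR (y i) < INR N - 1) by (repeat destruct Rle_dec in H; unfold geo in G; lra).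
 rewrite INR_IZR_INZ in H1. destruct H1.
 split. apply le_IZR. rewrite minus_IZR. lra. apply lt_IZR. rewrite plus_IZR. lra. Qed.

Lemma ss_step d N gamma chi y i s (v : Z) : (i < d)%nat ->
  (forall j, srw_step d N s y j = if Nat.eqb j i then v else y j) ->
  ss d N gamma chi (srw_step d N s y) = ss d N gamma chi y + (DD N gamma chi (IZR v) ^ 2 - DD N gamma chi (IZR (y i)) ^ 2).
Proof. intros Hi H. unfold ss.
 rewrite (sumR_update d _ (fun j => DD N gamma chi (IZR (y j)) ^ 2) i Hi).
 - rewrite H, Nat.eqb_refl. ring.
 - intros j Hj. rewrite H. apply Nat.eqb_neq in Hj. rewrite Hj. auto. Qed.

Lemma subharm d N gamma chi lam y : (0 < d)%nat -> geo N gamma chi -> in_torus d N y -> 0 < lam ->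
  rho d N gamma chi y < Lrad N gamma chi - 1 ->
  lam * (2 * rho d N gamma chi y + 1) <= 1/2 ->
  3 * INR d / 2 <= lam * (rho d N gamma chi y ^ 2 - 2 * INR d * rho d N gamma chi y) ->
  (1 + lam) * psi d N gamma chi lam y <=
  / INR (2 * d) * sumR (2 * d) (fun k => psi d N gamma chi lam (srw_step d N k y)).
Proof. intros Hd G Hy Hl Hr Hu Hm.
 assert (HG : Lrad N gamma chi + 2 <= INR N - Lrad N gamma chi) by apply G.
 assert (HG' : Lrad N gamma chi <= INR N - Lrad N gamma chi) by lra.
 set (D := fun i => DD N gamma chi (IZR (y i))).
 set (u := fun i => DD N gamma chi (IZR (y i) + 1) ^ 2 - D i ^ 2).
 set (v := fun i => DD N gamma chi (IZR (y i) - 1) ^ 2 - D i ^ 2).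
 set (P := psi d N gamma chi lam y).
 assert (HP : 0 < P) by apply exp_pos.
 assert (E : sumR (2 * d) (fun k => psi d N gamma chi lam (srw_step d N k y)) =
             sumR d (fun i => P * (exp (- (lam * u i)) + exp (- (lam * v i))))).
 { rewrite sumR_pairs. apply sumR_ext. intros i Hi.
   destruct (coord_inner d N gamma chi y i G Hy Hi Hr) as [C1 C2].
   unfold psi. rewrite (ss_step d N gamma chi y i (2 * i) ((y i + 1)%Z)); auto.
   rewrite (ss_step d N gamma chi y i (2 * i + 1) ((y i - 1)%Z)); auto.
   - unfold P, psi, u, v, D. rewrite plus_IZR, minus_IZR. assert (EX : forall s a, exp (- lam * (s + a)) = exp (- lam * s) * exp (- (lam * a))) by (intros; rewrite <- exp_plus; f_equal; ring). rewrite !EX. ring.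
   - intros j. rewrite step_odd. destruct (Nat.eqb_spec j i); subst; auto. apply Z.mod_small; lia.
   - intros j. rewrite step_even. destruct (Nat.eqb_spec j i); subst; auto. apply Z.mod_small; lia. }
 rewrite E.
 assert (Hrho0 : 0 <= rho d N gamma chi y) by apply sqrt_pos.
 assert (Hterm : forall i, (i < d)%nat ->
   P * (2 - 2 * lam + lam ^ 2 * (16 * D i ^ 2 - 32 * D i) / 6) <= P * (exp (- (lam * u i)) + exp (- (lam * v i)))).
 { intros i Hi. apply Rmult_le_compat_l; [lra|].
   assert (HDi : D i <= rho d N gamma chi y) by (apply DD_le_rho; auto).
   assert (HD0 : 0 <= D i) by apply Dd_nonneg.
   pose proof (Dd_abs1 _ _ (IZR (y i)) 1 HG' (or_introl eq_refl)) as Au.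
   pose proof (Dd_abs1 _ _ (IZR (y i)) (-1) HG' (or_intror eq_refl)) as Av.
   replace (IZR (y i) + -1) with (IZR (y i) - 1) in Av by ring.
   fold (DD N gamma chi (IZR (y i) + 1)) in Au. fold (DD N gamma chi (IZR (y i) - 1)) in Av.
   fold (DD N gamma chi (IZR (y i))) in Au, Av. fold (D i) in Au, Av. fold (u i) in Au. fold (v i) in Av.
   assert (E1 := exp_quad (lam * u i)). assert (E2 := exp_quad (lam * v i)).
   rewrite Rabs_mult, (Rabs_pos_eq lam) in E1, E2 by lra.
   assert (lam * Rabs (u i) <= 1/2) by (apply Rle_trans with (lam * (2 * rho d N gamma chi y + 1)); [apply Rmult_le_compat_l; lra| auto]).
   assert (lam * Rabs (v i) <= 1/2) by (apply Rle_trans with (lam * (2 * rho d N gamma chi y + 1)); [apply Rmult_le_compat_l; lra| auto]).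
   specialize (E1 ltac:(lra)). specialize (E2 ltac:(lra)).
   pose proof (Dd_second _ _ (IZR (y i)) HG) as S2. pose proof (Dd_diff _ _ (IZR (y i)) HG) as S3.
   fold (DD N gamma chi (IZR (y i) + 1)) in S2, S3. fold (DD N gamma chi (IZR (y i) - 1)) in S2, S3.
   fold (DD N gamma chi (IZR (y i))) in S2, S3. fold (D i) in S2, S3. fold (u i) (v i) in S2, S3.
   assert (0 <= (u i + v i)^2) by apply pow2_ge_0.
   assert (lam ^ 2 * ((u i - v i) ^ 2) / 6 <= lam^2 * (u i ^2 + v i ^2) / 3).
   { assert (0 <= lam ^ 2) by nra. assert ((u i - v i)^2 / 6 <= (u i ^2 + v i ^2)/3) by nra. nra. }
   assert (lam ^ 2 * (16 * D i ^ 2 - 32 * D i) / 6 <= lam ^ 2 * ((u i - v i) ^ 2) / 6).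
   { assert (0 <= lam ^ 2) by nra. apply Rmult_le_compat_r; [lra|]. apply Rmult_le_compat_l; lra. }
   replace ((lam * u i)^2) with (lam^2 * u i ^2) in E1 by ring.
   replace ((lam * v i)^2) with (lam^2 * v i ^2) in E2 by ring.
   nra. }
 eapply Rle_trans; [|apply Rmult_le_compat_l; [left; apply Rinv_0_lt_compat, lt_0_INR; lia| apply sumR_le; exact Hterm]].
 rewrite sumR_scal, !sumR_plus, sumR_const.
 rewrite (sumR_ext d (fun i => lam ^ 2 * (16 * D i ^ 2 - 32 * D i) / 6)
            (fun i => (lam^2 * 16 / 6) * D i ^ 2 + (- (lam^2 * 32 / 6)) * D i)) by (intros; field).
 rewrite sumR_plus, !sumR_scal.
 assert (Hs : sumR d (fun i => D i ^ 2) = rho d N gamma chi y ^ 2) by (rewrite rho_sq; auto).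
 assert (HsD : sumR d D <= INR d * rho d N gamma chi y).
 { apply (sum_le_n_sqrt d D). intros; apply Dd_nonneg. }
 rewrite Hs. rewrite mult_INR. replace (INR 2) with 2 by (simpl; lra).
 assert (Hd' : 0 < INR d) by (apply lt_0_INR; lia).
 replace (/ (2 * INR d)) with (/ 2 * / INR d) by (field; lra).
 set (r := rho d N gamma chi y) in *.
 assert (lam ^2 * 32 / 6 * sumR d D <= lam ^2 * 32 / 6 * (INR d * r)) by (apply Rmult_le_compat_l; [nra|auto]).
 apply (Rmult_le_reg_l (2 * INR d)); [lra|].
 replace (2 * INR d * ((1 + lam) * P)) with (P * (2 * INR d * (1 + lam))) by ring.
 replace (2 * INR d * (/ 2 * / INR d * (P * (INR d * (2 - 2 * lam) + (lam ^ 2 * 16 / 6 * r ^ 2 + - (lam ^ 2 * 32 / 6) * sumR d D)))))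
   with (P * (INR d * (2 - 2 * lam) + (lam ^ 2 * 16 / 6 * r ^ 2 + - (lam ^ 2 * 32 / 6) * sumR d D))) by (field; lra).
 apply Rmult_le_compat_l; [lra|].
 assert (lam * (3 * INR d / 2) <= lam * (lam * (r ^ 2 - 2 * INR d * r))) by (apply Rmult_le_compat_l; lra).
 nra. Qed.


Definition av d (g : nat -> R) := / INR (2 * d) * sumR (2 * d) g.

Lemma av_plus d f g : av d (fun k => f k + g k) = av d f + av d g.
Proof. unfold av. rewrite sumR_plus. ring. Qed.
Lemma av_scal d c f : av d (fun k => c * f k) = c * av d f.
Proof. unfold av. rewrite sumR_scal. ring. Qed.
Lemma av_const d c : (0 < d)%nat -> av d (fun _ => c) = c.
Proof. intros H. unfold av. rewrite sumR_const. field. apply not_0_INR. lia. Qed.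
Lemma av_le d f g : (0 < d)%nat -> (forall k, (k < 2 * d)%nat -> f k <= g k) -> av d f <= av d g.
Proof. intros Hd H. unfold av. apply Rmult_le_compat_l. left. apply Rinv_0_lt_compat.
 apply lt_0_INR; lia. apply sumR_le; auto. Qed.

Fixpoint qfun (d N : nat) (A D : pt -> Prop) (n : nat) (x : pt) : R :=
  if decP (D x) then 0 else if decP (A x) then 0 else
  match n with
  | O => 1
  | S m => / INR (2 * d) * sumR (2 * d) (fun k => qfun d N A D m (srw_step d N k x))
  end.

Lemma steps_torus d N k y : (0 < N)%nat -> in_torus d N y -> in_torus d N (srw_step d N k y).
Proof. intros HN Hy i Hi. unfold srw_step. destruct (Nat.eqb i (k/2)); [destruct (Nat.even k)|]; auto;
 apply Z.mod_pos_bound; lia. Qed.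

Lemma q_bounds d N A D n y : (0 < d)%nat -> 0 <= qfun d N A D n y <= 1.
Proof. revert y. induction n; intros y Hd; simpl; destruct (decP (D y)); try lra; destruct (decP (A y)); try lra.
 apply avg_bounds; auto. Qed.

Lemma h_bounds d N A D n y : (0 < d)%nat -> 0 <= srw_hit d N A D n y <= 1.
Proof. revert y. induction n; intros y Hd; simpl; destruct (decP (D y)); try lra; destruct (decP (A y)); try lra.
 apply avg_bounds; auto. Qed.

Lemma h_mono d N A D n y : (0 < d)%nat -> srw_hit d N A D n y <= srw_hit d N A D (S n) y.
Proof. revert y. induction n; intros y Hd.
 - change (srw_hit d N A D 0 y) with (if decP (D y) then 0 else if decP (A y) then 1 else 0).
   change (srw_hit d N A D 1 y) with (if decP (D y) then 0 else if decP (A y) then 1 else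
     av d (fun k => srw_hit d N A D 0 (srw_step d N k y))).
   destruct (decP (D y)); try lra; destruct (decP (A y)); try lra.
   unfold av. apply (proj1 (avg_bounds d (fun k => srw_hit d N A D 0 (srw_step d N k y)) 0 1 Hd (fun k _ => h_bounds d N A D 0 _ Hd))).
 - change (srw_hit d N A D (S n) y) with (if decP (D y) then 0 else if decP (A y) then 1 else
     av d (fun k => srw_hit d N A D n (srw_step d N k y))).
   change (srw_hit d N A D (S (S n)) y) with (if decP (D y) then 0 else if decP (A y) then 1 else
     av d (fun k => srw_hit d N A D (S n) (srw_step d N k y))).
   destruct (decP (D y)); try lra; destruct (decP (A y)); try lra.
   apply av_le; auto. Qed.

Lemma claimQ d N A D psi eta n y : (0 < d)%nat -> (0 < N)%nat -> 0 < eta ->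
  (forall y, in_torus d N y -> 0 <= psi y <= 1) ->
  (forall y, in_torus d N y -> ~ D y -> ~ A y -> psi y + eta <= av d (fun k => psi (srw_step d N k y))) ->
  in_torus d N y -> psi y + eta * INR n * qfun d N A D n y <= 1.
Proof. intros Hd HN He Hp Hs. revert y. induction n; intros y Hy.
 - simpl. rewrite Rmult_0_r, Rmult_0_l. pose proof (Hp y Hy). lra.
 - change (qfun d N A D (S n) y) with (if decP (D y) then 0 else if decP (A y) then 0 else
     av d (fun k => qfun d N A D n (srw_step d N k y))).
   pose proof (Hp y Hy).
   destruct (decP (D y)); [lra|]. destruct (decP (A y)); [lra|].
   pose proof (Hs y Hy n0 n1).
   assert (H2 : av d (fun k => psi (srw_step d N k y) + eta * INR n * qfun d N A D n (srw_step d N k y)) <= 1).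
   { rewrite <- (av_const d 1 Hd). apply av_le; auto. intros; apply IHn. apply steps_torus; auto. }
   rewrite av_plus, av_scal in H2.
   assert (H3 : av d (fun k => qfun d N A D n (srw_step d N k y)) <= 1).
   { rewrite <- (av_const d 1 Hd). apply av_le; auto. intros; apply q_bounds; auto. }
   rewrite S_INR. nra. Qed.

Lemma claimF d N A D psi c0 n y : (0 < d)%nat -> (0 < N)%nat -> 0 <= c0 ->
  (forall y, in_torus d N y -> 0 <= psi y <= 1) ->
  (forall y, in_torus d N y -> D y -> psi y <= c0) ->
  (forall y, in_torus d N y -> ~ D y -> ~ A y -> psi y <= av d (fun k => psi (srw_step d N k y))) ->
  in_torus d N y -> psi y - c0 <= srw_hit d N A D n y + qfun d N A D n y.
Proof. intros Hd HN Hc Hp HD Hs. revert y. induction n; intros y Hy.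
 - simpl. pose proof (Hp y Hy). destruct (decP (D y)). pose proof (HD y Hy d0). lra.
   destruct (decP (A y)); lra.
 - change (qfun d N A D (S n) y) with (if decP (D y) then 0 else if decP (A y) then 0 else
     av d (fun k => qfun d N A D n (srw_step d N k y))).
   change (srw_hit d N A D (S n) y) with (if decP (D y) then 0 else if decP (A y) then 1 else
     av d (fun k => srw_hit d N A D n (srw_step d N k y))).
   pose proof (Hp y Hy).
   destruct (decP (D y)). pose proof (HD y Hy d0). lra. destruct (decP (A y)); [lra|].
   pose proof (Hs y Hy n0 n1).
   assert (H2 : av d (fun k => psi (srw_step d N k y) - c0) <= av d (fun k => srw_hit d N A D n (srw_step d N k y) + qfun d N A D n (srw_step d N k y))).
   { apply av_le; auto. intros; apply IHn. apply steps_torus; auto. }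
   rewrite av_plus in H2. unfold Rminus in H2. rewrite av_plus, av_const in H2 by auto. lra. Qed.

Lemma final_limit d N A D psi c0 eta x : (0 < d)%nat -> (0 < N)%nat -> 0 <= c0 -> 0 < eta ->
  (forall y, in_torus d N y -> 0 <= psi y <= 1) ->
  (forall y, in_torus d N y -> D y -> psi y <= c0) ->
  (forall y, in_torus d N y -> ~ D y -> ~ A y -> psi y + eta <= av d (fun k => psi (srw_step d N k y))) ->
  in_torus d N x ->
  exists l, Un_cv (fun n => srw_hit d N A D n x) l /\ psi x - c0 <= l.
Proof. intros Hd HN Hc He Hp HD Hs Hx.
 assert (Hg : Un_growing (fun n => srw_hit d N A D n x)) by (intro n; apply h_mono; auto).
 assert (Hb : has_ub (fun n => srw_hit d N A D n x)).
 { exists 1. intros r [n ->]. apply h_bounds; auto. }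
 destruct (growing_cv _ Hg Hb) as [l Hl]. exists l. split; auto.
 pose proof (growing_ineq _ _ Hg Hl) as Hle.
 apply Rnot_lt_le. intro C.
 set (e := psi x - c0 - l).
 destruct (INR_unbounded (/ (eta * e))) as [n Hn].
 assert (Hs' : forall y, in_torus d N y -> ~ D y -> ~ A y -> psi y <= av d (fun k => psi (srw_step d N k y))).
 { intros y Hy H1 H2. pose proof (Hs y Hy H1 H2). lra. }
 pose proof (claimF d N A D psi c0 n x Hd HN Hc Hp HD Hs' Hx).
 pose proof (claimQ d N A D psi eta n x Hd HN He Hp Hs Hx).
 pose proof (Hle n). pose proof (Hp x Hx).
 assert (He2 : 0 < eta * e) by (unfold e; nra).
 assert (1 < eta * e * INR n).
 { apply (Rmult_lt_compat_l (eta * e)) in Hn; auto. rewrite Rinv_r in Hn by lra. lra. }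
 pose proof (q_bounds d N A D n x Hd).
 assert (qfun d N A D n x < e).
 { apply Rnot_le_lt. intro C2. assert (eta * e * INR n <= eta * INR n * qfun d N A D n x).
   { replace (eta * e * INR n) with (eta * INR n * e) by ring. apply Rmult_le_compat_l; auto.
     apply Rmult_le_pos; [lra| apply pos_INR]. }
   lra. }
 unfold e in *. lra. Qed.


Lemma exp_le_mono x y : x <= y -> exp x <= exp y.
Proof. intros [H|H]. left; apply exp_increasing; auto. subst; lra. Qed.

Definition Kc d chi := 24 * INR d / chi ^ 2.

Lemma main_N d N gamma chi x : (3 <= d)%nat -> 0 < chi < 1/4 ->
  let n := INR N in let g := Rpower n gamma in let K := Kc d chi in
  6 * INR d + 2 <= g -> g <= n / 16 -> 16 <= n -> 4 * (3 * INR d + 1) / chi <= n -> 6 * K <= n ->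
  in_torus d N x -> bdry d N (Bset d N gamma chi) x ->
  exists l, Un_cv (fun k => srw_hit d N (Gset d N gamma chi) (DeltaSet d N gamma chi) k x) l /\
    exp (- (K * chi ^ 2)) * (K * chi) / (1 + K * chi) * (g / n) <= l.
Proof. intros Hd Hchi n g K Hg1 Hg2 Hn1 Hn2 Hn3 Hx Hbx.
 assert (Hd0 : (0 < d)%nat) by lia. assert (HdR : 3 <= INR d) by (replace 3 with (INR 3) by (simpl; lra); apply le_INR; auto).
 assert (HN : (0 < N)%nat) by (apply INR_lt; simpl; fold n; lra).
 assert (Hnp : 0 < n) by lra.
 assert (HK : 0 < K) by (unfold K, Kc; apply Rdiv_lt_0_compat; nra).
 assert (Hchin : 4 * (3 * INR d + 1) <= chi * n).
 { apply (Rmult_le_compat_l chi) in Hn2; [|lra]. unfold Rdiv in Hn2.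
   replace (chi * (4 * (3 * INR d + 1) * / chi)) with (4 * (3 * INR d + 1)) in Hn2 by (field; lra). lra. }
 assert (G : geo N gamma chi).
 { unfold geo, Lrad. fold n g. split; nra. }
 set (lam := K / n ^ 2).
 assert (Hlam : 0 < lam) by (unfold lam; apply Rdiv_lt_0_compat; nra).
 assert (Hlamn : lam * n ^ 2 = K) by (unfold lam; field; lra).
 set (c0 := exp (- lam * (chi * n + g / 2) ^ 2)).
 set (psi' := psi d N gamma chi lam).
 set (eta := lam * exp (- K)).
 assert (Heta : 0 < eta) by (unfold eta; apply Rmult_lt_0_compat; auto; apply exp_pos).
 assert (Hpsi : forall y, in_torus d N y -> 0 <= psi' y <= 1).
 { intros y _. unfold psi', psi. split. left; apply exp_pos. rewrite <- exp_0. apply exp_le_mono.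
   pose proof (ss_nonneg d N gamma chi y). nra. }
 assert (HD : forall y, in_torus d N y -> DeltaSet d N gamma chi y -> psi' y <= c0).
 { intros y Hy HDy. unfold psi', psi, c0. apply exp_le_mono.
   assert (~ rho d N gamma chi y < chi * n + g / 2).
   { intro C. apply (notDelta d N gamma chi y G Hy); change (INR N) with n; change (Rpower n gamma) with g; [lra|lra|lra|exact HDy]. }
   rewrite <- rho_sq. assert (0 <= chi * n + g/2) by nra.
   assert ((chi * n + g / 2) ^ 2 <= rho d N gamma chi y ^ 2) by (apply pow_incr; lra). nra. }
 assert (Hsub : forall y, in_torus d N y -> ~ DeltaSet d N gamma chi y -> ~ Gset d N gamma chi y ->
            psi' y + eta <= av d (fun k => psi' (srw_step d N k y))).
 { intros y Hy HnD HnG.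
   pose proof (notDelta_rho d N gamma chi y G Hy HnD) as R1. fold n g in R1.
   assert (R2 : chi * n / 2 - INR d - 1 < rho d N gamma chi y).
   { apply Rnot_le_lt. intro C. apply HnG. apply inG; auto. }
   set (r := rho d N gamma chi y) in *.
   assert (Hr0 : 0 <= r) by apply sqrt_pos.
   assert (S1 := subharm d N gamma chi lam y Hd0 G Hy Hlam).
   assert (Hrl : r < Lrad N gamma chi - 1) by (unfold Lrad; fold n g; lra).
   assert (Hu : lam * (2 * r + 1) <= 1/2).
   { assert (chi * n <= n / 4) by nra. assert (2 * r + 1 <= 3 * n) by lra.
     assert (lam * (2 * r + 1) <= lam * (3 * n)) by (apply Rmult_le_compat_l; lra).
     assert (lam * (3 * n) = 3 * K / n) by (unfold lam; field; lra).
     assert (3 * K / n <= 1/2).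
     { apply (Rmult_le_reg_l n); auto. unfold Rdiv. replace (n * (3 * K * / n)) with (3 * K) by (field; lra). lra. }
     lra. }
   assert (Hm : 3 * INR d / 2 <= lam * (r ^ 2 - 2 * INR d * r)).
   { assert (r ^ 2 - 2 * INR d * r >= (chi * n / 4) ^ 2).
     { assert (r - 2 * INR d >= chi * n / 4) by lra. assert (r >= chi * n / 4) by lra.
       assert (0 <= chi * n / 4) by lra.
       replace (r ^ 2 - 2 * INR d * r) with (r * (r - 2 * INR d)) by ring. nra. }
     assert (lam * (chi * n / 4) ^ 2 = 3 * INR d / 2).
     { unfold lam, K, Kc. field. lra. }
     assert (lam * (chi * n / 4) ^ 2 <= lam * (r ^ 2 - 2 * INR d * r)) by (apply Rmult_le_compat_l; lra).
     lra. }
   specialize (S1 Hrl Hu Hm).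
   assert (psi' y >= exp (- K)).
   { unfold psi', psi. apply Rle_ge, exp_le_mono. rewrite <- rho_sq. fold r.
     assert (r ^ 2 <= n ^ 2) by (assert (chi * n <= n / 4) by nra; apply pow_incr; lra). nra. }
   unfold av. fold psi' in S1. unfold eta. nra. }
 assert (Hc0 : 0 <= c0) by (left; apply exp_pos).
 destruct (final_limit d N (Gset d N gamma chi) (DeltaSet d N gamma chi) psi' c0 eta x Hd0 HN Hc0 Heta Hpsi HD Hsub Hx)
   as [l [Hl1 Hl2]].
 exists l. split; auto.
 assert (HxB : Bset d N gamma chi x) by apply Hbx.
 pose proof (B_rho d N gamma chi x G HxB) as Rx. fold n in Rx.
 assert (Hrx0 : 0 <= rho d N gamma chi x) by apply sqrt_pos.
 assert (Hpx : exp (- (K * chi ^ 2)) <= psi' x).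
 { unfold psi', psi. apply exp_le_mono. rewrite <- rho_sq.
   assert (rho d N gamma chi x ^ 2 <= (chi * n) ^ 2) by (apply pow_incr; lra).
   assert (lam * (chi * n) ^ 2 = K * chi ^ 2) by (unfold lam; field; lra). nra. }
 set (u0 := K * chi * (g / n)).
 assert (Hgp : 0 < g) by (unfold g, Rpower; apply exp_pos).
 assert (Hu0 : 0 < u0) by (unfold u0; apply Rmult_lt_0_compat; [nra| apply Rdiv_lt_0_compat; lra]).
 assert (Hu0' : u0 <= K * chi).
 { unfold u0. assert (g / n <= 1) by (apply (Rmult_le_reg_l n); auto; unfold Rdiv; replace (n * (g * / n)) with g by (field; lra); lra).
   assert (0 < K * chi) by nra. nra. }
 assert (Hc0' : c0 <= exp (- (K * chi ^ 2)) * exp (- u0)).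
 { unfold c0. rewrite <- exp_plus. apply exp_le_mono.
   assert (lam * (chi * n + g / 2) ^ 2 = K * chi ^ 2 + u0 + lam * (g/2)^2).
   { unfold u0, lam. field. lra. }
   assert (0 <= lam * (g / 2) ^ 2) by nra. nra. }
 assert (Hexp : exp (- u0) <= 1 / (1 + u0)).
 { pose proof (exp_ineq1_le u0). assert (exp u0 * exp (- u0) = 1) by (rewrite <- exp_plus; replace (u0 + - u0) with 0 by ring; apply exp_0).
   assert (0 < exp (- u0)) by apply exp_pos.
   apply (Rmult_le_reg_l (1 + u0)); [lra|]. replace ((1 + u0) * (1 / (1 + u0))) with 1 by (field; lra). nra. }
 assert (Hfrac : K * chi / (1 + K * chi) * (g / n) <= 1 - exp (- u0)).
 { assert (u0 / (1 + K * chi) <= u0 / (1 + u0)).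
   { apply Rmult_le_compat_l; [lra|]. apply Rinv_le_contravar; lra. }
   assert (K * chi / (1 + K * chi) * (g / n) = u0 / (1 + K * chi)) by (unfold u0; field; nra).
   assert (1 - 1 / (1 + u0) = u0 / (1 + u0)) by (field; lra). lra. }
 assert (Hepos : 0 < exp (- (K * chi ^ 2))) by apply exp_pos.
 replace (exp (- (K * chi ^ 2)) * (K * chi) / (1 + K * chi) * (g / n)) with
   (exp (- (K * chi ^ 2)) * (K * chi / (1 + K * chi) * (g / n))) by (field; nra).
 assert (exp (- (K * chi ^ 2)) * (K * chi / (1 + K * chi) * (g / n)) <= exp (- (K * chi ^ 2)) * (1 - exp (- u0)))
   by (apply Rmult_le_compat_l; lra).
 nra. Qed.


Theorem mainTheorem12 :
  forall (d : nat) (gamma chi : R),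
    (3 <= d)%nat ->
    1 / (INR d - 1) < gamma < 1 ->
    0 < chi < 1 / 4 ->
    exists c1 : R, 0 < c1 /\
      exists N0 : nat, forall N : nat, (N0 <= N)%nat ->
        forall x : pt, in_torus d N x ->
          bdry d N (Bset d N gamma chi) x ->
          exists l : R,
            Un_cv (fun n => srw_hit d N (Gset d N gamma chi) (DeltaSet d N gamma chi) n x) l /\
            c1 * Rpower (INR N) (gamma - 1) <= l.
Proof.
 intros d gamma chi Hd Hg Hchi.
 assert (HdR : 3 <= INR d) by (replace 3 with (INR 3) by (simpl; lra); apply le_INR; auto).
 assert (Hg0 : 0 < gamma).
 { assert (0 < 1 / (INR d - 1)) by (apply Rdiv_lt_0_compat; lra). lra. }
 set (K := Kc d chi).
 assert (HK : 0 < K) by (unfold K, Kc; apply Rdiv_lt_0_compat; nra).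
 exists (exp (- (K * chi ^ 2)) * (K * chi) / (1 + K * chi)). split.
 { apply Rdiv_lt_0_compat; [apply Rmult_lt_0_compat; [apply exp_pos| nra]| nra]. }
 set (P := 6 * INR d + 2).
 set (B1 := Rpower P (/ gamma)).
 set (B2 := Rpower 16 (/ (1 - gamma))).
 set (B := Rmax (Rmax B1 B2) (Rmax (Rmax 16 (4 * (3 * INR d + 1) / chi)) (6 * K))).
 destruct (INR_unbounded B) as [N0 HN0].
 exists N0. intros N HN x Hx Hbx.
 assert (HnB : B <= INR N) by (apply Rle_trans with (INR N0); [lra| apply le_INR; auto]).
 assert (HB1 : B1 <= INR N).
 { eapply Rle_trans; [|exact HnB]. unfold B. eapply Rle_trans; [|apply Rmax_l]. apply Rmax_l. }
 assert (H16 : 16 <= INR N).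
 { eapply Rle_trans; [|exact HnB]. unfold B. eapply Rle_trans; [|apply Rmax_r]. eapply Rle_trans; [|apply Rmax_l]. apply Rmax_l. }
 assert (HB2 : B2 <= INR N).
 { eapply Rle_trans; [|exact HnB]. unfold B. eapply Rle_trans; [|apply Rmax_l]. apply Rmax_r. }
 assert (Hc4 : 4 * (3 * INR d + 1) / chi <= INR N).
 { eapply Rle_trans; [|exact HnB]. unfold B. eapply Rle_trans; [|apply Rmax_r]. eapply Rle_trans; [|apply Rmax_l]. apply Rmax_r. }
 assert (HK6 : 6 * K <= INR N).
 { eapply Rle_trans; [|exact HnB]. unfold B. eapply Rle_trans; [|apply Rmax_r]. apply Rmax_r. }
 set (n := INR N) in *.
 assert (Hn : 0 < n) by lra.
 set (g := Rpower n gamma).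
 assert (HP : 0 < P) by (unfold P; lra).
 assert (Hg1 : P <= g).
 { unfold g. replace P with (Rpower B1 gamma).
   apply Rle_Rpower_l; [lra|]. split; auto. unfold B1, Rpower; apply exp_pos.
   unfold B1. rewrite Rpower_mult. replace (/ gamma * gamma) with 1 by (field; lra). apply Rpower_1; auto. }
 assert (Hg2 : g <= n / 16).
 { assert (E : g * Rpower n (1 - gamma) = n).
   { unfold g. rewrite <- Rpower_plus. replace (gamma + (1 - gamma)) with 1 by ring. apply Rpower_1; auto. }
   assert (H16' : 16 <= Rpower n (1 - gamma)).
   { replace 16 with (Rpower B2 (1 - gamma)). apply Rle_Rpower_l; [lra|]. split; auto. unfold B2, Rpower; apply exp_pos.
     unfold B2. rewrite Rpower_mult. replace (/ (1 - gamma) * (1 - gamma)) with 1 by (field; lra). apply Rpower_1; lra. }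
   assert (0 < g) by (unfold g, Rpower; apply exp_pos).
   apply (Rmult_le_reg_r 16); [lra|]. replace (n / 16 * 16) with n by field. rewrite <- E.
   apply Rmult_le_compat_l; lra. }
 destruct (main_N d N gamma chi x Hd Hchi) with (1 := Hg1) (2 := Hg2) (3 := H16) (4 := Hc4) (5 := HK6) (6 := Hx) (7 := Hbx)
   as [l [Hl1 Hl2]].
 exists l. split; auto.
 assert (E : Rpower n (gamma - 1) = g / n).
 { unfold g. replace gamma with ((gamma - 1) + 1) at 2 by ring. rewrite Rpower_plus, Rpower_1 by auto. field. lra. }
 rewrite E. exact Hl2. Qed.
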